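(* Let $\mathcal V$ be a congruence-modular variety and $A\in\mathcal V$. For all $\alpha,\beta,\theta\in\mathrm{Con}(A)$, in $\mathrm{Con}(A/\theta)$ we have: (1) $(\alpha\vee\theta)/\theta\to(\beta\vee\theta)/\theta=((\alpha\vee\theta)\to(\beta\vee\theta))/\theta=(\alpha\to(\beta\vee\theta))/\theta$; (2) $((\alpha\vee\theta)/\theta)^{\perp}=(\alpha\to\theta)/\theta$.
   Context: For an algebra $M$, $\mathrm{Con}(M)$ is its congruence lattice with bottom $\Delta_M$ and top $\nabla_M=M^2$; $[\cdot,\cdot]_M$ denotes the (term condition, here equal to the modular) commutator on $\mathrm{Con}(M)$: for $\alpha,\beta,\mu\in\mathrm{Con}(M)$, $C(\alpha,\beta;\mu)$ means that for all $n,k$, every $(n+k)$-ary term $t$, all $(a_i,b_i)\in\alpha$ and $(c_j,d_j)\in\beta$: $(t(\bar a,\bar c),t(\bar a,\bar d))\in\mu$ iff $(t(\bar b,\bar c),t(\bar b,\bar d))\in\mu$, and $[\alpha,\beta]_M=\bigcap\{\mu: C(\alpha,\beta;\mu)\}$. For $\theta\in\mathrm{Con}(A)$ and $\gamma\supseteq\theta$, $\gamma/\theta=\{(a/\theta,b/\theta):(a,b)\in\gamma\}\in\mathrm{Con}(A/\theta)$. In any algebra $M$ and for $\beta,\gamma\in\mathrm{Con}(M)$: $\beta\to\gamma=\bigvee\{\alpha\in\mathrm{Con}(M):[\alpha,\beta]_M\subseteq\gamma\}$ and $\beta^\perp=\beta\to\Delta_M$ (computed in $M$; in the claim, $\to$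 and $^\perp$ on the left-hand sides are computed in $A/\theta$, those inside parentheses in $A$). *)

(* Defs.v *)
From mathcomp Require Import ssreflect ssrbool eqtype ssrnat fintype.
From Stdlib Require Import ClassicalEpsilon.

Set Implicit Arguments.
Unset Strict Implicit.

Record signature := Signature { sym : Type; arity : sym -> nat }.

Record algebra (s : signature) := Algebra {
  carrier :> Type;
  ops : forall f : sym s, ('I_(arity f) -> carrier) -> carrier }.
Arguments ops {s} _ f _.

Inductive term (s : signature) (X : Type) : Type :=
  | Var : X -> term s X
  | App : forall f : sym s, ('I_(arity f) -> term s X) -> term s X.
Arguments Var {s X} x.
Arguments App {s X} f ts.

Fixpoint eval (s : signature) (M : algebra s) (X : Type) (v : X -> M)
  (t : term s X) : M :=
  match t with
  | Var x => v x
  | App f ts => ops M f (fun i => @eval s M X v (ts i))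
  end.
Arguments eval {s} M {X} v t.

Definition prel (T : Type) := T -> T -> Prop.
Definition subrel (T : Type) (R S : prel T) := forall x y, R x y -> S x y.
Definition releq (T : Type) (R S : prel T) := forall x y, R x y <-> S x y.

Definition is_con (s : signature) (M : algebra s) (R : prel M) : Prop :=
  (forall x, R x x) /\ (forall x y, R x y -> R y x) /\
  (forall x y z, R x y -> R y z -> R x z) /\
  (forall (f : sym s) (a b : 'I_(arity f) -> M),
      (forall i, R (a i) (b i)) -> R (ops M f a) (ops M f b)).

Definition Delta (T : Type) : prel T := fun x y => x = y.
Definition cmeet (T : Type) (R S : prel T) : prel T := fun x y => R x y /\ S x y.
Definition bigjoin (s : signature) (M : algebra s) (P : prel M -> Prop) : prel M :=
  fun x y => forall g : prel M, is_con g -> (forall a, P a -> subrel a g) -> g x y.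
Definition cjoin (s : signature) (M : algebra s) (R S : prel M) : prel M :=
  bigjoin (fun a => a = R \/ a = S).

Definition identities (s : signature) := term s nat -> term s nat -> Prop.
Definition models (s : signature) (Sigma : identities s) (M : algebra s) : Prop :=
  forall p q, Sigma p q -> forall v : nat -> M, eval M v p = eval M v q.

Definition congruence_modular (s : signature) (Sigma : identities s) : Prop :=
  forall M : algebra s, models Sigma M ->
  forall a b g : prel M, is_con a -> is_con b -> is_con g -> subrel a g ->
    releq (cjoin a (cmeet b g)) (cmeet (cjoin a b) g).

Definition sumval (T : Type) (n k : nat) (a : 'I_n -> T) (c : 'I_k -> T)
  : 'I_n + 'I_k -> T :=
  fun z => match z with inl i => a i | inr j => c j end.

Definition TC (s : signature) (M : algebra s) (al be mu : prel M) : Prop :=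
  forall (n k : nat) (t : term s ('I_n + 'I_k)) (a b : 'I_n -> M)
         (c d : 'I_k -> M),
    (forall i, al (a i) (b i)) -> (forall j, be (c j) (d j)) ->
    (mu (eval M (sumval a c) t) (eval M (sumval a d) t) <->
     mu (eval M (sumval b c) t) (eval M (sumval b d) t)).

Definition comm (s : signature) (M : algebra s) (al be : prel M) : prel M :=
  fun x y => forall mu : prel M, is_con mu -> TC al be mu -> mu x y.

Definition carrow (s : signature) (M : algebra s) (be ga : prel M) : prel M :=
  bigjoin (fun al : prel M => is_con al /\ subrel (comm al be) ga).
Definition cperp (s : signature) (M : algebra s) (be : prel M) : prel M :=
  carrow be (@Delta M).

Section Quotient.
Variables (s : signature) (A : algebra s) (th : prel A).

Definition qcarrier : Type := {S : A -> Prop | exists a : A, S = th a}.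
Definition qclass (a : A) : qcarrier := exist _ (th a) (ex_intro (fun b => th a = th b) a (@Logic.eq_refl _ (th a))).
Definition qrepr (c : qcarrier) : A :=
  proj1_sig (constructive_indefinite_description _ (proj2_sig c)).
Definition qops (f : sym s) (cs : 'I_(arity f) -> qcarrier) : qcarrier :=
  qclass (ops A f (fun i => qrepr (cs i))).
Definition quot_alg : algebra s := @Algebra s qcarrier qops.

Definition quot_rel (g : prel A) : prel quot_alg :=
  fun c d => exists a b, c = qclass a /\ d = qclass b /\ g a b.
End Quotient.
Arguments quot_rel {s A} th g _ _.
Arguments quot_alg {s} A th.

(* Main.v *)
From Pilot Require Import Defs.
From mathcomp Require Import ssreflect ssrbool ssrfun eqtype ssrnat seq fintype bigop.
From Stdlib Require Import ClassicalEpsilon FunctionalExtensionality PropExtensionality ProofIrrelevance Relations.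

Notation subrel := Pilot.Defs.subrel.
Set Implicit Arguments.
Unset Strict Implicit.
Unset Printing Implicit Defensive.

Lemma releq_eq (T : Type) (R S : prel T) : releq R S -> R = S.
Proof.
move=> H; apply: functional_extensionality => x; apply: functional_extensionality => y.
apply: propositional_extensionality; exact: H.
Qed.

Lemma sig_eq (T : Type) (P : T -> Prop) (x y : {z | P z}) : sval x = sval y -> x = y.
Proof.
case: x => x px; case: y => y py /= Exy; subst y; f_equal; apply: proof_irrelevance.
Qed.

Lemma choice_fun (I T : Type) (P : I -> T -> Prop) :
  (forall i, exists x, P i x) -> exists h : I -> T, forall i, P i (h i).
Proof.
move=> H; exists (fun i => proj1_sig (constructive_indefinite_description _ (H i))).
move=> i; exact: proj2_sig (constructive_indefinite_description _ (H i)).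
Qed.

Definition sumv (T X Y : Type) (a : X -> T) (c : Y -> T) : (X + Y)%type -> T :=
  fun z => match z with inl x => a x | inr y => c y end.

Fixpoint rename (s : signature) (X Y : Type) (g : X -> Y) (t : term s X) : term s Y :=
  match t with
  | Var x => Var (g x)
  | App f ts => App f (fun i => rename g (ts i))
  end.

Lemma eval_rename (s : signature) (M : algebra s) (X Y : Type) (g : X -> Y)
  (v : Y -> M) (t : term s X) :
  eval M v (rename g t) = eval M (fun x => v (g x)) t.
Proof.
elim: t => [x|f ts IH] //=; f_equal; apply: functional_extensionality => i; exact: IH.
Qed.

Lemma eval_ext (s : signature) (M : algebra s) (X : Type) (v w : X -> M) (t : term s X) :
  (forall x, v x = w x) -> eval M v t = eval M w t.
Proof. by move=> H; rewrite (functional_extensionality _ _ H). Qed.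

Section Basics.
Variables (s : signature) (M : algebra s).

Lemma con_refl (R : prel M) : is_con R -> forall x, R x x.
Proof. by case. Qed.
Lemma con_sym (R : prel M) : is_con R -> forall x y, R x y -> R y x.
Proof. by case=> _ []. Qed.
Lemma con_trans (R : prel M) : is_con R -> forall x y z, R x y -> R y z -> R x z.
Proof. by case=> _ [_ []]. Qed.
Lemma con_comp (R : prel M) : is_con R -> forall (f : sym s) (a b : 'I_(arity f) -> M),
      (forall i, R (a i) (b i)) -> R (ops M f a) (ops M f b).
Proof. by case=> _ [_ []]. Qed.

Lemma eval_con (R : prel M) (X : Type) (v w : X -> M) (t : term s X) :
  is_con R -> (forall x, R (v x) (w x)) -> R (eval M v t) (eval M w t).
Proof.
move=> HR Hvw; elim: t => [x|f ts IH] //=; exact: con_comp.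
Qed.

Lemma bigjoin_con (P : prel M -> Prop) : is_con (bigjoin P).
Proof.
split; [|split; [|split]].
- by move=> x g Hg _; apply: con_refl.
- by move=> x y H g Hg Hs; apply: con_sym => //; apply: H.
- by move=> x y z H1 H2 g Hg Hs; apply: (con_trans Hg (H1 g Hg Hs) (H2 g Hg Hs)).
- by move=> f a b H g Hg Hs; apply: con_comp => // i; apply: H.
Qed.

Lemma bigjoin_ub (P : prel M -> Prop) (a : prel M) : P a -> subrel a (bigjoin P).
Proof. intros Pa x y Hxy g Hg Hs; exact: Hs _ Pa _ _ Hxy. Qed.

Lemma bigjoin_lub (P : prel M -> Prop) (g : prel M) :
  is_con g -> (forall a, P a -> subrel a g) -> subrel (bigjoin P) g.
Proof. intros Hg Hs x y H; exact: H g Hg Hs. Qed.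

Lemma cmeet_con (R S : prel M) : is_con R -> is_con S -> is_con (cmeet R S).
Proof.
move=> HR HS; split; [|split; [|split]].
- by move=> x; split; apply: con_refl.
- by move=> x y [H1 H2]; split; apply: con_sym.
- by move=> x y z [H1 H2] [H3 H4]; split; [apply: con_trans H1 H3|apply: con_trans H2 H4].
- by move=> f a b H; split; apply: con_comp => // i; case: (H i).
Qed.

Lemma Delta_con : is_con (@Delta M).
Proof.
split; [|split; [|split]]; rewrite /Delta //.
- by move=> x y z -> ->.
- by move=> f a b H; f_equal; apply: functional_extensionality.
Qed.

End Basics.

Definition upd (X : Type) (n : nat) (g : 'I_n -> X) (i : 'I_n) (u : X) : 'I_n -> X :=
  fun j => if j == i then u else g j.

Lemma change_coords (X : Type) (n : nat) (R : X -> X -> Prop)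
  (Psi : ('I_n -> X) -> ('I_n -> X) -> Prop) :
  (forall g, Psi g g) -> (forall g h k, Psi g h -> Psi h k -> Psi g k) ->
  (forall g i u v, R u v -> Psi (upd g i u) (upd g i v)) ->
  forall a b, (forall i, clos_refl_trans X R (a i) (b i)) -> Psi a b.
Proof.
move=> Hrefl Htr Hstep a b Hab.
have Hstep' : forall g i u v, clos_refl_trans X R u v -> Psi (upd g i u) (upd g i v).
  move=> g i u v; elim=> [x y Hxy|x|x y z _ IH1 _ IH2].
  - exact: Hstep.
  - exact: Hrefl.
  - exact: Htr IH1 IH2.
pose mix m := fun j : 'I_n => if (j < m)%N then b j else a j.
have H0 : mix 0 = a by apply: functional_extensionality.
have Hn : mix n = b by apply: functional_extensionality => j; rewrite /mix ltn_ord.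
suff: forall m, m <= n -> Psi a (mix m) by move/(_ n (leqnn n)); rewrite Hn.
elim=> [|m IH] Hm; first by rewrite H0.
apply: Htr (IH (ltnW Hm)) _.
have -> : mix m = upd (mix m) (Ordinal Hm) (a (Ordinal Hm)).
  apply: functional_extensionality => j; rewrite /upd /mix.
  case: eqP => [->|//]; by rewrite /= ltnn.
have -> : mix m.+1 = upd (mix m) (Ordinal Hm) (b (Ordinal Hm)).
  apply: functional_extensionality => j; rewrite /upd /mix.
  case: eqP => [->|Hj]; first by rewrite /= ltnSn.
  rewrite ltnS leq_eqVlt; case: eqP => // Ej; exfalso; apply: Hj; exact: val_inj.
exact: Hstep'.
Qed.

Section Chains.
Variables (s : signature) (M : algebra s).

Lemma crt_sym (R : prel M) : (forall x y, R x y -> R y x) ->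
  forall x y, clos_refl_trans M R x y -> clos_refl_trans M R y x.
Proof.
move=> HR x y; elim=> [u v H|u|u v w _ IH1 _ IH2].
- by apply: rt_step; apply: HR.
- exact: rt_refl.
- exact: rt_trans IH2 IH1.
Qed.

Lemma crt_compat (R : prel M) :
  (forall f g i u v, R u v ->
     clos_refl_trans M R (ops M f (upd g i u)) (ops M f (upd g i v))) ->
  forall f a b, (forall i, clos_refl_trans M R (a i) (b i)) ->
     clos_refl_trans M R (ops M f a) (ops M f b).
Proof.
move=> H f; apply: (change_coords (Psi := fun g h => clos_refl_trans M R (ops M f g) (ops M f h))).
- by move=> g; apply: rt_refl.
- by move=> g h k H1 H2; apply: rt_trans H1 H2.
- by move=> g i u v Huv; apply: H.
Qed.

Lemma bigjoin_crt (P : prel M -> Prop) : (forall e, P e -> is_con e) ->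
  forall x y, bigjoin P x y ->
  clos_refl_trans M (fun u v => exists e, P e /\ e u v) x y.
Proof.
move=> HP x y H; apply: H.
- split; [|split; [|split]].
  + by move=> z; apply: rt_refl.
  + apply: crt_sym => u v [e [Pe Huv]]; exists e; split => //; exact: con_sym (HP e Pe) _ _ Huv.
  + by move=> u v w H1 H2; apply: rt_trans H1 H2.
  + apply: crt_compat => f g i u v [e [Pe Huv]]; apply: rt_step; exists e; split => //.
    apply: con_comp (HP e Pe) _ _ _ _ => j; rewrite /upd; case: eqP => _ //.
    exact: con_refl (HP e Pe) _.
- by move=> a Pa u v Huv; apply: rt_step; exists a.
Qed.

Lemma TC_bigjoin (P : prel M -> Prop) (be mu : prel M) :
  (forall e, P e -> is_con e) -> (forall e, P e -> TC e be mu) -> TC (bigjoin P) be mu.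
Proof.
move=> HP HT n k t a b c d Hab Hcd.
pose Phi := fun g : 'I_n -> M => mu (eval M (sumval g c) t) (eval M (sumval g d) t).
apply: (change_coords (R := fun u v => exists e, P e /\ e u v)
   (Psi := fun g h => Phi g <-> Phi h)).
- by move=> g.
- by move=> g h l H1 H2; apply: iff_trans H1 H2.
- move=> g i u v [e [Pe Huv]]; apply: (HT e Pe) => // j; rewrite /upd; case: eqP => _ //.
  exact: con_refl (HP e Pe) _.
- by move=> i; apply: bigjoin_crt => //; apply: Hab.
Qed.

Lemma TC_triv1 (e be mu : prel M) : is_con mu -> subrel e mu -> TC e be mu.
Proof.
move=> Hmu Hsub n k t a b c d Hab Hcd.
have H1 : mu (eval M (sumval a c) t) (eval M (sumval b c) t).
  apply: eval_con => // -[i|j] /=; [exact: Hsub|exact: con_refl].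
have H2 : mu (eval M (sumval a d) t) (eval M (sumval b d) t).
  apply: eval_con => // -[i|j] /=; [exact: Hsub|exact: con_refl].
split=> H.
- exact: (con_trans Hmu (con_sym Hmu H1) (con_trans Hmu H H2)).
- exact: (con_trans Hmu H1 (con_trans Hmu H (con_sym Hmu H2))).
Qed.

Lemma TC_mono2 (e be be' mu : prel M) : subrel be be' -> TC e be' mu -> TC e be mu.
Proof. by move=> Hs H n k t a b c d Hab Hcd; apply: H => // j; apply: Hs. Qed.

Lemma comm_con (al be : prel M) : is_con (comm al be).
Proof.
split; [|split; [|split]].
- by move=> x mu Hmu _; apply: con_refl.
- by move=> x y H mu Hmu HT; apply: con_sym => //; apply: H.
- by move=> x y z H1 H2 mu Hmu HT; apply: (con_trans Hmu (H1 mu Hmu HT) (H2 mu Hmu HT)).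
- by move=> f a b H mu Hmu HT; apply: con_comp => // i; apply: H.
Qed.

Lemma TC_comm (al be : prel M) : TC al be (comm al be).
Proof.
move=> n k t a b c d Hab Hcd; split=> H mu Hmu HT.
- by apply/(HT n k t a b c d Hab Hcd); apply: H.
- by apply/(HT n k t a b c d Hab Hcd); apply: H.
Qed.

Lemma comm_sub (al be ga : prel M) : is_con ga -> TC al be ga -> subrel (comm al be) ga.
Proof. by move=> Hg HT x y H; apply: H. Qed.

End Chains.


Section Subprod.
Variables (s : signature) (M1 M2 : algebra s) (R : M1 -> M2 -> Prop).
Hypothesis HR : forall (f : sym s) (a : 'I_(arity f) -> M1) (b : 'I_(arity f) -> M2),
  (forall i, R (a i) (b i)) -> R (ops M1 f a) (ops M2 f b).

Definition sp_carrier := {p : M1 * M2 | R p.1 p.2}.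
Definition sp_ops (f : sym s) (cs : 'I_(arity f) -> sp_carrier) : sp_carrier :=
  exist _ (ops M1 f (fun i => (sval (cs i)).1), ops M2 f (fun i => (sval (cs i)).2))
    (HR (fun i => svalP (cs i))).
Definition subprod : algebra s := @Algebra s sp_carrier sp_ops.

Lemma eval_sp (X : Type) (v : X -> subprod) (t : term s X) :
  sval (eval subprod v t) =
  (eval M1 (fun x => (sval (v x)).1) t, eval M2 (fun x => (sval (v x)).2) t).
Proof.
elim: t => [x|f ts IH] /=; first by case: (sval (v x)).
by f_equal; f_equal; apply: functional_extensionality => i; rewrite IH.
Qed.

Lemma models_sp (Sigma : identities s) :
  models Sigma M1 -> models Sigma M2 -> models Sigma subprod.
Proof.
move=> H1 H2 p q Hpq v; apply: sig_eq; rewrite !eval_sp.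
by rewrite (H1 p q Hpq) (H2 p q Hpq).
Qed.

Definition pb1 (g : prel M1) : prel subprod := fun p q => g (sval p).1 (sval q).1.
Definition pb2 (g : prel M2) : prel subprod := fun p q => g (sval p).2 (sval q).2.

Lemma pb1_con g : is_con g -> is_con (pb1 g).
Proof.
move=> Hg; rewrite /pb1; split; [|split; [|split]].
- by move=> x; apply: con_refl.
- by move=> x y; apply: con_sym.
- by move=> x y z; apply: con_trans.
- by move=> f a b H; apply: (con_comp Hg) => i; apply: H.
Qed.
Lemma pb2_con g : is_con g -> is_con (pb2 g).
Proof.
move=> Hg; rewrite /pb2; split; [|split; [|split]].
- by move=> x; apply: con_refl.
- by move=> x y; apply: con_sym.
- by move=> x y z; apply: con_trans.
- by move=> f a b H; apply: (con_comp Hg) => i; apply: H.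
Qed.
End Subprod.
Arguments pb1 {s M1 M2 R} HR g _ _.
Arguments pb2 {s M1 M2 R} HR g _ _.
Arguments models_sp {s M1 M2 R} HR {Sigma} _ _ [p q] _ v.


Section Shift.
Variables (s : signature) (Sigma : identities s).
Hypothesis Hcm : congruence_modular Sigma.

Lemma shifting (N : algebra s) : models Sigma N ->
  forall al be ga : prel N, is_con al -> is_con be -> is_con ga ->
  (forall x y, al x y -> be x y -> ga x y) ->
  forall x y z w, al x y -> al z w -> be x z -> be y w -> ga x y -> ga z w.
Proof.
move=> HN al be ga Hal Hbe Hga Hsub x y z w Hxy Hzw Hxz Hyw Gxy.
have Ha : is_con (cmeet ga al) by apply: cmeet_con.
have Hmod := Hcm HN Ha Hbe Hal (fun u v (H : cmeet ga al u v) => proj2 H).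
have : cmeet (cjoin (cmeet ga al) be) al z w.
  split => // g Hg Hs.
  have H1 : g z x by apply: Hs; [right|]; last exact: con_sym Hbe _ _ Hxz.
  have H2 : g x y by apply: Hs; [left|].
  have H3 : g y w by apply: Hs; [right|].
  exact: (con_trans Hg (con_trans Hg H1 H2) H3).
move/(Hmod z w) => H; apply: H => //.
move=> a [->|->] u v.
- by case.
- by case=> H1 H2; apply: Hsub.
Qed.
End Shift.


Section TCfin.
Variables (s : signature) (A : algebra s).
Lemma TC_fin (al be mu : prel A) : TC al be mu ->
  forall (X Y : finType) (t : term s (X + Y)%type) (a b : X -> A) (c d : Y -> A),
  (forall x, al (a x) (b x)) -> (forall y, be (c y) (d y)) ->
  (mu (eval A (sumv a c) t) (eval A (sumv a d) t) <->
   mu (eval A (sumv b c) t) (eval A (sumv b d) t)).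
Proof.
move=> HT X Y t a b c d Hab Hcd.
pose g := fun z : (X + Y)%type => match z with inl x => @inl 'I_#|X| 'I_#|Y| (enum_rank x)
                                 | inr y => inr (enum_rank y) end.
have E : forall (a' : X -> A) (c' : Y -> A),
    eval A (sumval (fun i => a' (enum_val i)) (fun j => c' (enum_val j))) (rename g t)
    = eval A (sumv a' c') t.
  move=> a' c'; rewrite eval_rename; apply: eval_ext => -[x|y] /=; by rewrite enum_rankK.
rewrite -!E; apply: HT => i; [exact: Hab|exact: Hcd].
Qed.
End TCfin.

Record cfg (s : signature) (A : Type) := Cfg {
  cX : finType; cY : finType; ct : term s (cX + cY)%type;
  ca : cX -> A; cb : cX -> A; cc : cY -> A; cd : cY -> A }.
Arguments cX {s A} c. Arguments cY {s A} c. Arguments ct {s A} c.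
Arguments ca {s A} c _. Arguments cb {s A} c _. Arguments cc {s A} c _. Arguments cd {s A} c _.

Section Delta.
Variables (s : signature) (Sigma : identities s).
Hypothesis Hcm : congruence_modular Sigma.
Variables (A : algebra s) (HA : models Sigma A) (al be : prel A).
Hypotheses (Hal : is_con al) (Hbe : is_con be).

Definition M := subprod (con_comp Hal).
Lemma HM : models Sigma M. Proof. exact: models_sp HA HA. Qed.

Definition cfg_ok (w : cfg s A) (P Q : M) :=
  (forall x, al (ca w x) (cb w x)) /\ (forall y, be (cc w y) (cd w y)) /\
  sval P = (eval A (sumv (ca w) (cc w)) (ct w), eval A (sumv (cb w) (cc w)) (ct w)) /\
  sval Q = (eval A (sumv (ca w) (cd w)) (ct w), eval A (sumv (cb w) (cd w)) (ct w)).

Definition Tcfg (P Q : M) : Prop := exists w, cfg_ok w P Q.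

Lemma Tcfg_refl P : Tcfg P P.
Proof.
case: P => [[x y] Hxy].
exists (@Cfg s A unit unit (Var (inl tt)) (fun _ => x) (fun _ => y) (fun _ => x) (fun _ => x)).
split; [by move=> ? /=|split; [move=> ? /=; exact: con_refl|by split]].
Qed.

Lemma Tcfg_gen (P Q : M) u u' : be u u' -> sval P = (u, u) -> sval Q = (u', u') -> Tcfg P Q.
Proof.
move=> Hu EP EQ.
exists (@Cfg s A unit unit (Var (inr tt)) (fun _ => u) (fun _ => u) (fun _ => u) (fun _ => u')).
split; [move=> ? /=; exact: con_refl|split; [by move=> ?|by split]].
Qed.

Lemma Tcfg_sym P Q : Tcfg P Q -> Tcfg Q P.
Proof.
case=> w [H1 [H2 [E1 E2]]].
exists (@Cfg s A (cX w) (cY w) (ct w) (ca w) (cb w) (cd w) (cc w)).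
split => //; split => //= y; exact: con_sym Hbe _ _ (H2 y).
Qed.

Lemma Tcfg_compat (f : sym s) (a b : 'I_(arity f) -> M) :
  (forall i, Tcfg (a i) (b i)) -> Tcfg (ops M f a) (ops M f b).
Proof.
move=> H; have [w Hw] := choice_fun H.
pose X := {l : 'I_(arity f) & cX (w l)}.
pose Y := {l : 'I_(arity f) & cY (w l)}.
pose lift l := fun z : (cX (w l) + cY (w l))%type =>
  match z with inl x => @inl X Y (existT _ l x) | inr y => @inr X Y (existT _ l y) end.
pose t := App f (fun l => rename (lift l) (ct (w l))).
exists (@Cfg s A ({l : 'I_(arity f) & cX (w l)} : finType) ({l : 'I_(arity f) & cY (w l)} : finType) t
   (fun p => ca (w (projT1 p)) (projT2 p)) (fun p => cb (w (projT1 p)) (projT2 p))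
   (fun p => cc (w (projT1 p)) (projT2 p)) (fun p => cd (w (projT1 p)) (projT2 p))).
split; [by case=> l x /=; case: (Hw l)|split; [by case=> l y /=; case: (Hw l) => _ []|]].
rewrite /=; split; (f_equal; f_equal; apply: functional_extensionality => l;
  rewrite eval_rename; case: (Hw l) => _ [_ [E1 E2]]; rewrite ?E1 ?E2 /=; apply: eval_ext => -[x|y] //).
Qed.

Fixpoint Tk (k : nat) : prel M :=
  match k with 0 => Tcfg | k'.+1 => fun P Q => exists R, Tk k' P R /\ Tk k' R Q end.

Lemma Tk_refl k P : Tk k P P.
Proof. elim: k P => [|k IH] P /=; [exact: Tcfg_refl|by exists P]. Qed.

Lemma Tk_sym k P Q : Tk k P Q -> Tk k Q P.
Proof.
elim: k P Q => [|k IH] P Q /=; first exact: Tcfg_sym.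
by case=> R [H1 H2]; exists R; split; apply: IH.
Qed.

Lemma Tk_compat k (f : sym s) (a b : 'I_(arity f) -> M) :
  (forall i, Tk k (a i) (b i)) -> Tk k (ops M f a) (ops M f b).
Proof.
elim: k a b => [|k IH] a b /=; first exact: Tcfg_compat.
move=> H; have [h Hh] := choice_fun H.
exists (ops M f h); split; apply: IH => i; by case: (Hh i).
Qed.

Lemma Tk_mono k j : k <= j -> forall P Q, Tk k P Q -> Tk j P Q.
Proof.
elim: j => [|j IH]; first by rewrite leqn0 => /eqP ->.
rewrite leq_eqVlt => /orP [/eqP -> //|Hlt] P Q H.
have := IH Hlt P Q H => H'; by exists Q; split => //; apply: Tk_refl.
Qed.

Definition D (P Q : M) : Prop := exists k, Tk k P Q.

Lemma D_con : is_con D.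
Proof.
split; [|split; [|split]].
- by move=> P; exists 0; apply: Tk_refl.
- by move=> P Q [k H]; exists k; apply: Tk_sym.
- move=> P Q R [k1 H1] [k2 H2]; exists (maxn k1 k2).+1; exists Q; split.
  + by apply: Tk_mono H1; apply: leq_maxl.
  + by apply: Tk_mono H2; apply: leq_maxr.
- move=> f a b H; have [ks Hks] := choice_fun H.
  exists (\max_(l < arity f) ks l); apply: Tk_compat => l.
  by apply: Tk_mono (Hks l); apply: (@leq_bigmax _ ks l).
Qed.

Definition Good (ga : prel A) (U : prel M) :=
  forall P Q, U P Q -> ga (sval P).1 (sval Q).1 -> ga (sval P).2 (sval Q).2.

Lemma Good_T (ga : prel A) : TC al be ga -> Good ga Tcfg.
Proof.
move=> HT P Q [w [H1 [H2 [E1 E2]]]]; rewrite E1 E2 /=.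
exact: (proj1 (TC_fin HT (ct w) H1 H2)).
Qed.

Lemma Good_double (ga : prel A) (U : prel M) (Uc : forall (f : sym s) (a b : 'I_(arity f) -> M),
    (forall i, U (a i) (b i)) -> U (ops M f a) (ops M f b)) :
  is_con ga -> (forall P, U P P) -> (forall P Q, U P Q -> U Q P) ->
  Good ga U -> Good ga (fun P Q => exists R, U P R /\ U R Q).
Proof.
move=> Hga Ur Us HG P S [Q [HPQ HQS]] HPS.
pose N := subprod Uc.
have HN : models Sigma N := models_sp Uc HM HM.
pose e1 : N := exist _ (P, P) (Ur P).
pose e2 : N := exist _ (P, Q) HPQ.
pose e3 : N := exist _ (S, Q) (Us _ _ HQS).
pose e4 : N := exist _ (S, S) (Ur S).
pose k1 := pb1 Uc (@Delta M).
pose k2 := pb2 Uc (@Delta M).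
pose Z := cmeet (pb1 Uc (pb1 (con_comp Hal) ga)) (pb2 Uc (pb1 (con_comp Hal) ga)).
have Hk1 : is_con k1 by apply: pb1_con; apply: Delta_con.
have Hk2 : is_con k2 by apply: pb2_con; apply: Delta_con.
have HZ : is_con Z by apply: cmeet_con; [apply: pb1_con|apply: pb2_con]; apply: pb1_con.
have Ha : is_con (cmeet k2 Z) by apply: cmeet_con.
have Hmod := Hcm HN Ha Hk1 HZ (fun u v (H : cmeet k2 Z u v) => proj2 H).
have H14 : cjoin (cmeet k2 Z) (cmeet k1 Z) e1 e4.
  apply/(Hmod e1 e4); split.
  - move=> g Hg Hs.
    have G1 : g e1 e2.
      apply: (Hs k1); first by right.
      by [].
    have G2 : g e2 e3.
      apply: (Hs (cmeet k2 Z)); first by left.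
      split; first by [].
      rewrite /Z; split; [exact: HPS|exact: (con_refl Hga)].
    have G3 : g e3 e4.
      apply: (Hs k1); first by right.
      by [].
    exact: (con_trans Hg (con_trans Hg G1 G2) G3).
  - by split.
have Hc : forall e, (e = cmeet k2 Z \/ e = cmeet k1 Z) -> is_con e.
  by move=> e [->|->]; apply: cmeet_con.
have Ch := bigjoin_crt Hc H14.
pose Inv := fun f : N => Z e1 f /\ ga (sval P).2 (sval (sval f).1).2.
have GN : forall f : N, Z e1 f -> ga (sval (sval f).1).2 (sval (sval f).2).2.
  move=> f [Z1 Z2]; apply: HG (svalP f) _.
  exact: (con_trans Hga (con_sym Hga Z1) Z2).
suff: forall x y, clos_refl_trans N (fun u v => exists e, (e = cmeet k2 Z \/ e = cmeet k1 Z) /\ e u v) x y ->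
   Inv x -> Inv y.
  move/(_ e1 e4 Ch); case.
  - split; [exact: con_refl|exact: con_refl].
  - by [].
move=> x y; elim=> [u v [e [[->|->] [Huv Zuv]]]|u|u v w _ IH1 _ IH2] //; last first.
- by move=> /IH1 /IH2.
- case=> Zu Iu; split; first exact: (con_trans HZ Zu Zuv).
  by rewrite -Huv.
- case=> Zu Iu; have Zv : Z e1 v by exact: (con_trans HZ Zu Zuv).
  split => //.
  have Gu := GN u Zu; have Gv := GN v Zv.
  apply: (con_trans Hga Iu); apply: (con_trans Hga Gu).
  rewrite /k2 /pb2 /Delta in Huv; rewrite Huv; exact: con_sym Hga _ _ Gv.
Qed.

Lemma Good_Tk (ga : prel A) : is_con ga -> TC al be ga -> forall k, Good ga (Tk k).
Proof.
move=> Hga HT; elim=> [|k IH] /=; first exact: Good_T.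
apply: Good_double => //; [exact: Tk_compat|exact: Tk_refl|exact: Tk_sym].
Qed.

Lemma Good_D (ga : prel A) : is_con ga -> TC al be ga -> Good ga D.
Proof. by move=> Hga HT P Q [k H]; apply: Good_Tk H. Qed.

Lemma TC_mono (ga de : prel A) : is_con ga -> is_con de -> TC al be ga -> subrel ga de ->
  TC al be de.
Proof.
move=> Hga Hde HT Hsub.
have GD := Good_D Hga HT.
have fwd : forall n k (t : term s ('I_n + 'I_k)%type) (a b : 'I_n -> A) (c d : 'I_k -> A),
    (forall i, al (a i) (b i)) -> (forall j, be (c j) (d j)) ->
    de (eval A (sumval a c) t) (eval A (sumval a d) t) ->
    de (eval A (sumval b c) t) (eval A (sumval b d) t).
  move=> n k t a b c d Hab Hcd H.
  have HP : al (eval A (sumval a c) t) (eval A (sumval b c) t).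
    by apply: eval_con => // -[i|j] /=; [exact: Hab|exact: (con_refl Hal)].
  have HQ : al (eval A (sumval a d) t) (eval A (sumval b d) t).
    by apply: eval_con => // -[i|j] /=; [exact: Hab|exact: (con_refl Hal)].
  have Hx : be (eval A (sumval a c) t) (eval A (sumval a d) t).
    by apply: eval_con => // -[i|j] /=; [exact: (con_refl Hbe)|exact: Hcd].
  pose P : M := exist _ (_, _) HP.
  pose Q : M := exist _ (_, _) HQ.
  pose r : M := exist _ (eval A (sumval a c) t, eval A (sumval a c) t) (con_refl Hal _).
  pose r' : M := exist _ (eval A (sumval a d) t, eval A (sumval a d) t) (con_refl Hal _).
  have DPQ : D P Q.
    exists 0; exists (@Cfg s A ('I_n : finType) ('I_k : finType) t a b c d).
    by split => //; split.
  have Drr : D r r' by exists 0; exact: (@Tcfg_gen r r' _ _ Hx erefl erefl).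
  have Hd := pb1_con (con_comp Hal) (@Delta_con _ A).
  have := shifting Hcm HM D_con Hd (pb2_con (con_comp Hal) Hde) _ Drr DPQ erefl erefl H.
  apply.
  move=> x y Dxy Exy; apply: Hsub; apply: GD Dxy _.
  rewrite /pb1 /Delta in Exy; rewrite Exy; exact: (con_refl Hga).
move=> n k t a b c d Hab Hcd; split; first exact: fwd.
apply: fwd => // i; exact: (con_sym Hal (Hab i)).
Qed.

Lemma TC_sym (mu : prel A) : is_con mu -> TC al be mu -> TC be al mu.
Proof.
move=> Hmu HT.
have GD := Good_D Hmu HT.
have fwd : forall n k (t : term s ('I_n + 'I_k)%type) (a b : 'I_n -> A) (c d : 'I_k -> A),
    (forall i, be (a i) (b i)) -> (forall j, al (c j) (d j)) ->
    mu (eval A (sumval a c) t) (eval A (sumval a d) t) ->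
    mu (eval A (sumval b c) t) (eval A (sumval b d) t).
  move=> n k t a b c d Hab Hcd H.
  have HP : al (eval A (sumval a c) t) (eval A (sumval a d) t).
    by apply: eval_con => // -[i|j] /=; [exact: (con_refl Hal)|exact: Hcd].
  have HQ : al (eval A (sumval b c) t) (eval A (sumval b d) t).
    by apply: eval_con => // -[i|j] /=; [exact: (con_refl Hal)|exact: Hcd].
  have Hx : be (eval A (sumval a c) t) (eval A (sumval b c) t).
    by apply: eval_con => // -[i|j] /=; [exact: Hab|exact: (con_refl Hbe)].
  pose P : M := exist _ (_, _) HP.
  pose Q : M := exist _ (_, _) HQ.
  pose P0 : M := exist _ (eval A (sumval a c) t, eval A (sumval a c) t) (con_refl Hal _).
  pose Q0 : M := exist _ (eval A (sumval b c) t, eval A (sumval b c) t) (con_refl Hal _).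
  pose sw := fun z : ('I_n + 'I_k)%type =>
    match z with inl i => @inr 'I_k 'I_n i | inr j => inl j end.
  have Esw : forall (a' : 'I_n -> A) (c' : 'I_k -> A),
      eval A (sumv c' a') (rename sw t) = eval A (sumval a' c') t.
    by move=> a' c'; rewrite eval_rename; apply: eval_ext => -[i|j].
  have DPQ : D P Q.
    exists 0; exists (@Cfg s A ('I_k : finType) ('I_n : finType) (rename sw t) c d a b).
    split => //; split => //; split; by rewrite /= !Esw.
  have DPQ0 : D P0 Q0 by exists 0; exact: (@Tcfg_gen P0 Q0 _ _ Hx erefl erefl).
  have Hd := pb1_con (con_comp Hal) (@Delta_con _ A).
  have := shifting Hcm HM Hd D_con (pb2_con (con_comp Hal) Hmu) _ (erefl : pb1 _ (@Delta A) P0 P)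
     (erefl : pb1 _ (@Delta A) Q0 Q) DPQ0 DPQ H.
  apply.
  move=> x y Exy Dxy; apply: GD Dxy _.
  rewrite /pb1 /Delta in Exy; rewrite Exy; exact: (con_refl Hmu).
move=> n k t a b c d Hab Hcd; split; first exact: fwd.
apply: fwd => // i; exact: (con_sym Hbe (Hab i)).
Qed.

End Delta.


Section Arrow.
Variables (s : signature) (Sigma : identities s).
Hypothesis Hcm : congruence_modular Sigma.
Variables (A : algebra s) (HA : models Sigma A).

Lemma comm_TC (al be de : prel A) : is_con al -> is_con be -> is_con de ->
  subrel (comm al be) de -> TC al be de.
Proof.
move=> Hal Hbe Hde Hs.
have := @TC_mono _ _ Hcm _ HA _ _ Hal Hbe _ _ (@comm_con _ _ al be) Hde (@TC_comm _ _ al be) Hs. by [].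
Qed.

Lemma carrow_con (ze ga : prel A) : is_con (carrow ze ga).
Proof. exact: bigjoin_con. Qed.

Lemma carrow_TC (ze ga : prel A) : is_con ze -> is_con ga -> TC (carrow ze ga) ze ga.
Proof.
move=> Hz Hg; apply: TC_bigjoin => e [He Hs] //; exact: comm_TC.
Qed.

Lemma carrow_ub (e ze ga : prel A) : is_con e -> is_con ga -> TC e ze ga ->
  subrel e (carrow ze ga).
Proof.
move=> He Hg HT; apply: bigjoin_ub; split => //; exact: comm_sub Hg HT.
Qed.

Lemma carrow_join (al th ga : prel A) : is_con al -> is_con th -> is_con ga -> subrel th ga ->
  carrow (cjoin al th) ga = carrow al ga.
Proof.
move=> Hal Hth Hga Hsub.
have Hj : is_con (cjoin al th) by apply: bigjoin_con.
have Hsj : subrel al (cjoin al th) by apply: bigjoin_ub; left.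
apply: releq_eq => x y; split; move: x y.
- apply: carrow_ub => //; first exact: carrow_con.
  apply: TC_mono2 Hsj _; exact: carrow_TC.
- apply: carrow_ub => //; first exact: carrow_con.
  have He := carrow_con al ga.
  apply: (TC_sym Hcm HA Hj He Hga).
  apply: TC_bigjoin.
  + by move=> e [->|->].
  + move=> e [->|->].
    * apply: (TC_sym Hcm HA He Hal Hga); exact: carrow_TC.
    * exact: TC_triv1.
Qed.
End Arrow.


Section Quot.
Variables (s : signature) (A : algebra s) (th : prel A).
Hypothesis Hth : is_con th.
Notation Q := (quot_alg A th).
Notation cl := (qclass th).

Lemma qclass_eq a b : th a b -> cl a = cl b.
Proof.
move=> H; apply: sig_eq => /=.
apply: functional_extensionality => x; apply: propositional_extensionality; split => Hx.
- exact: (con_trans Hth (con_sym Hth H) Hx).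
- exact: (con_trans Hth H Hx).
Qed.

Lemma qclass_inj a b : cl a = cl b -> th a b.
Proof.
move/(f_equal (@proj1_sig _ _)) => /= E.
have : th b b by exact: con_refl Hth b.
by rewrite -E.
Qed.

Lemma qclass_surj (c : Q) : exists a, c = cl a.
Proof.
case: c => S [a Ea]; exists a; exact: sig_eq.
Qed.

Lemma qrepr_class a : th (qrepr (cl a)) a.
Proof.
apply: qclass_inj; apply: sig_eq => /=.
rewrite /qrepr; case: (constructive_indefinite_description _ _) => r /= <- //.
Qed.

Lemma qops_class (f : sym s) (a : 'I_(arity f) -> A) :
  ops Q f (fun i => cl (a i)) = cl (ops A f a).
Proof.
rewrite /= /qops; apply: qclass_eq; apply: con_comp => // i; exact: qrepr_class.
Qed.

Lemma eval_quot (X : Type) (v : X -> A) (t : term s X) :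
  eval Q (fun x => cl (v x)) t = cl (eval A v t).
Proof.
elim: t => [x|f ts IH] //.
rewrite [LHS]/= -qops_class.
have E : (fun i => eval Q (fun x => cl (v x)) (ts i)) = (fun i => cl (eval A v (ts i))).
  by apply: functional_extensionality => i; exact: IH.
by rewrite -E.
Qed.

Lemma qrel_class (g : prel A) a b : is_con g -> subrel th g ->
  quot_rel th g (cl a) (cl b) <-> g a b.
Proof.
move=> Hg Hs; split; last by move=> H; exists a, b.
case=> a' [b' [Ea [Eb H]]].
have Ha := qclass_inj Ea; have Hb := qclass_inj Eb.
exact: (con_trans Hg (Hs _ _ Ha) (con_trans Hg H (con_sym Hg (Hs _ _ Hb)))).
Qed.

Lemma qrel_con (g : prel A) : is_con g -> subrel th g -> is_con (quot_rel th g).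
Proof.
move=> Hg Hs; split; [|split; [|split]].
- move=> c; have [a ->] := qclass_surj c; apply/qrel_class => //; exact: con_refl.
- move=> c d; have [a ->] := qclass_surj c; have [b ->] := qclass_surj d.
  move/qrel_class => H; apply/qrel_class => //; exact: con_sym (H Hg Hs).
- move=> c d e; have [a ->] := qclass_surj c; have [b ->] := qclass_surj d.
  have [x ->] := qclass_surj e.
  move=> /(qrel_class _ _ Hg Hs) H1 /(qrel_class _ _ Hg Hs) H2; apply/qrel_class => //.
  exact: con_trans H1 H2.
- move=> f c d H.
  have H' : forall i, exists p : A * A, c i = cl p.1 /\ d i = cl p.2 /\ g p.1 p.2.
    by move=> i; case: (H i) => a [b Hab]; exists (a, b).
  have [h Hh] := choice_fun H'.
  have Ec : c = fun i => cl (h i).1 by apply: functional_extensionality => i; by case: (Hh i).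
  have Ed : d = fun i => cl (h i).2 by apply: functional_extensionality => i; by case: (Hh i) => _ [].
  rewrite Ec Ed !qops_class; apply/qrel_class => //; apply: con_comp => // i.
  by case: (Hh i) => _ [].
Qed.

Definition qpb (e : prel Q) : prel A := fun x y => e (cl x) (cl y).

Lemma qpb_con (e : prel Q) : is_con e -> is_con (qpb e).
Proof.
move=> He; rewrite /qpb; split; [|split; [|split]].
- by move=> x; apply: (con_refl He).
- by move=> x y; apply: (con_sym He).
- by move=> x y z; apply: (con_trans He).
- by move=> f a b H; rewrite -!qops_class; apply: (con_comp He).
Qed.

Lemma qpb_th (e : prel Q) : is_con e -> subrel th (qpb e).
Proof. by move=> He x y H; rewrite /qpb (qclass_eq H); apply: (con_refl He). Qed.

Lemma eval_quot_sum n k (t : term s ('I_n + 'I_k)%type) (a : 'I_n -> A) (c : 'I_k -> A) :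
  eval Q (sumval (fun i => cl (a i)) (fun j => cl (c j))) t = cl (eval A (sumval a c) t).
Proof. by rewrite -eval_quot; apply: eval_ext => -[i|j]. Qed.

Lemma TC_Q_A (e z mu : prel Q) (ze : prel A) :
  TC e z mu -> (forall c d, ze c d -> z (cl c) (cl d)) -> TC (qpb e) ze (qpb mu).
Proof.
move=> HT Hz n k t a b c d Hab Hcd.
have := HT n k t (fun i => cl (a i)) (fun i => cl (b i)) (fun j => cl (c j)) (fun j => cl (d j))
  Hab (fun j => Hz _ _ (Hcd j)).
by rewrite /qpb !eval_quot_sum.
Qed.

Lemma TC_A_Q (ep ze ga : prel A) : is_con ga -> subrel th ga -> TC ep ze ga ->
  TC (quot_rel th ep) (quot_rel th ze) (quot_rel th ga).
Proof.
move=> Hga Hs HT n k t a b c d Hab Hcd.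
have Hab' : forall i, exists p : A * A, a i = cl p.1 /\ b i = cl p.2 /\ ep p.1 p.2.
  by move=> i; case: (Hab i) => x [y H]; exists (x, y).
have Hcd' : forall j, exists p : A * A, c j = cl p.1 /\ d j = cl p.2 /\ ze p.1 p.2.
  by move=> j; case: (Hcd j) => x [y H]; exists (x, y).
have [ha Ha] := choice_fun Hab'; have [hc Hc] := choice_fun Hcd'.
have -> : a = fun i => cl (ha i).1 by apply: functional_extensionality => i; case: (Ha i).
have -> : b = fun i => cl (ha i).2 by apply: functional_extensionality => i; case: (Ha i) => _ [].
have -> : c = fun j => cl (hc j).1 by apply: functional_extensionality => j; case: (Hc j).
have -> : d = fun j => cl (hc j).2 by apply: functional_extensionality => j; case: (Hc j) => _ [].
rewrite !eval_quot_sum !(qrel_class _ _ Hga Hs); apply: HT.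
- by move=> i; case: (Ha i) => _ [].
- by move=> j; case: (Hc j) => _ [].
Qed.

Lemma Delta_quot : @Delta Q = quot_rel th th.
Proof.
apply: releq_eq => c d; split.
- move=> <-; have [a ->] := qclass_surj c; exists a, a; split => //; split => //; exact: con_refl.
- by case=> a [b [-> [-> H]]]; apply: qclass_eq.
Qed.

Variables (Sigma : identities s).
Hypothesis Hcm : congruence_modular Sigma.
Hypothesis HA : models Sigma A.

Lemma quot_carrow (al ga : prel A) : is_con al -> is_con ga -> subrel th ga ->
  releq (carrow (quot_rel th al) (quot_rel th ga)) (quot_rel th (carrow al ga)).
Proof.
move=> Hal Hga Hs.
have Hka := carrow_con al ga.
have Htk : subrel th (carrow al ga).
  by apply: carrow_ub => //; apply: TC_triv1.
have HTk := carrow_TC Hcm HA Hal Hga.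
move=> x y; split.
- apply: (bigjoin_lub (qrel_con Hka Htk)) => e [He Hce] c d Hcd.
  have [a Ea] := qclass_surj c; have [b Eb] := qclass_surj d.
  rewrite Ea Eb in Hcd *; apply/qrel_class => //.
  have Hm := @comm_con _ Q e (quot_rel th al).
  have HT1 := TC_Q_A (@TC_comm _ Q e (quot_rel th al))
     (fun c d (H : al c d) => ex_intro _ c (ex_intro _ d (conj erefl (conj erefl H)))).
  have HT2 := TC_mono Hcm HA (qpb_con He) Hal (qpb_con Hm) Hga HT1
     (fun u v H => proj1 (qrel_class _ _ Hga Hs) (Hce _ _ H)).
  exact: (carrow_ub (qpb_con He) Hga HT2 Hcd).
- move=> H; apply: (bigjoin_ub _ H); split; first exact: qrel_con.
  exact: comm_sub (qrel_con Hga Hs) (TC_A_Q Hga Hs HTk).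
Qed.

End Quot.


Theorem mainTheorem2 (s : signature) (Sigma : identities s) :
  congruence_modular Sigma ->
  forall A : algebra s, models Sigma A ->
  forall al be th : prel A, is_con al -> is_con be -> is_con th ->
    (releq (carrow (quot_rel th (cjoin al th)) (quot_rel th (cjoin be th)))
           (quot_rel th (carrow (cjoin al th) (cjoin be th)))
     /\ releq (quot_rel th (carrow (cjoin al th) (cjoin be th)))
              (quot_rel th (carrow al (cjoin be th))))
    /\ releq (cperp (quot_rel th (cjoin al th)))
             (quot_rel th (carrow al th)).
Proof.
move=> Hcm A HA al be th Hal Hbe Hth.
have Hj : is_con (cjoin al th) by apply: bigjoin_con.
have Hjb : is_con (cjoin be th) by apply: bigjoin_con.
have Hthb : Pilot.Defs.subrel th (cjoin be th) by apply: bigjoin_ub; right.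
have Hthth : Pilot.Defs.subrel th th by [].
split; [split|].
- exact: (quot_carrow Hth Hcm HA Hj Hjb Hthb).
- rewrite (carrow_join Hcm HA Hal Hth Hjb Hthb) => x y; by [].
- rewrite /cperp (Delta_quot Hth).
  have := quot_carrow Hth Hcm HA Hj Hth Hthth.
  by rewrite (carrow_join Hcm HA Hal Hth Hth Hthth).
Qed.
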